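(* Let $\mathcal{G}$ be the Lie group of $3\times 3$ pairwise comparisons matrices, $$\mathcal{G}=\left\{\begin{pmatrix} 1 & m_{12} & m_{13} \\ \frac{1}{m_{12}} & 1 & m_{23} \\ \frac{1}{m_{13}} & \frac{1}{m_{23}} & 1\end{pmatrix} : m_{12},m_{13},m_{23}\in\mathbb{R}^+\right\},$$ with the Hadamard (entrywise) product. Let $$H=\left\{\begin{pmatrix} 1 & k & \frac1k \\ \frac1k & 1 & k \\ k & \frac1k & 1\end{pmatrix} : k\in\mathbb{R}^+\right\},\qquad L=\left\{\begin{pmatrix} 1 & y & yz \\ \frac1y & 1 & z \\ \frac{1}{yz} & \frac1z & 1\end{pmatrix} : y,z\in\mathbb{R}^+\right\}.$$ Then: (i) $H$ and $L$ are normal subgroups of the Lie group $\mathcal{G}$; (ii) $\mathcal{G}$ is the internal direct product of the normal Lie subgroups $H$ and $L$; in particular $\mathcal{G}\simeq H\times L$.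
   Context: The Hadamard product is $M\cdot N=[m_{ij}n_{ij}]$, with identity the all-ones matrix $e$. A group $\mathcal{G}$ is the internal direct product of normal subgroups $N_1,\dots,N_n$ if $\mathcal{G}=N_1N_2\cdots N_n$ and $N_i\cap(N_1\cdots N_{i-1}N_{i+1}\cdots N_n)=\{e\}$ for every $i$. *)

(* Defs.v *)
From HB Require Import structures.
From mathcomp Require Import all_boot all_order all_algebra.
From mathcomp Require Import reals.
Set Implicit Arguments. Unset Strict Implicit. Unset Printing Implicit Defensive.
Import Order.TTheory GRing.Theory Num.Theory.
Local Open Scope ring_scope.

Section PC.
Variable R : realType.

Definition pcmat (a b c : R) : 'M[R]_3 := \matrix_(i < 3, j < 3)
  match nat_of_ord i, nat_of_ord j with
  | 0%N, 1%N => a | 0%N, 2%N => b | 1%N, 0%N => a^-1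
  | 1%N, 2%N => c | 2%N, 0%N => b^-1 | 2%N, 1%N => c^-1
  | _, _ => 1 end.

Definition hadamard (M N : 'M[R]_3) : 'M[R]_3 := \matrix_(i, j) (M i j * N i j).
Definition hone : 'M[R]_3 := const_mx 1.
Definition hinv (M : 'M[R]_3) : 'M[R]_3 := map_mx (fun x => x^-1) M.

Definition inG (M : 'M[R]_3) : Prop :=
  exists a b c : R, [/\ 0 < a, 0 < b, 0 < c & M = pcmat a b c].

Definition Hmat (k : R) : 'M[R]_3 := pcmat k k^-1 k.
Definition inH (M : 'M[R]_3) : Prop := exists k : R, 0 < k /\ M = Hmat k.

Definition Lmat (y z : R) : 'M[R]_3 := pcmat y (y * z) z.
Definition inL (M : 'M[R]_3) : Prop :=
  exists y z : R, [/\ 0 < y, 0 < z & M = Lmat y z].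

Definition is_subgroup (S : 'M[R]_3 -> Prop) : Prop :=
  [/\ forall M, S M -> inG M,
      S hone,
      forall M N, S M -> S N -> S (hadamard M N)
    & forall M, S M -> S (hinv M)].

Definition is_normal (S : 'M[R]_3 -> Prop) : Prop :=
  is_subgroup S /\
  forall g n, inG g -> S n -> S (hadamard (hadamard g n) (hinv g)).

Definition internal_direct_product2 (N1 N2 : 'M[R]_3 -> Prop) : Prop :=
  [/\ forall g, inG g <-> exists n1 n2, [/\ N1 n1, N2 n2 & g = hadamard n1 n2],
      forall M, N1 M /\ N2 M <-> M = hone
    & forall M, N2 M /\ N1 M <-> M = hone].

End PC.

(* Main.v *)
Require Import Defs.
From HB Require Import structures.
From mathcomp Require Import all_boot all_order all_algebra.
From mathcomp Require Import reals.
From mathcomp Require Import ring lra.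
Import Order.TTheory GRing.Theory Num.Theory.
Local Open Scope ring_scope.

Section S.
Variable R : realType.

Lemma pcmat_inj (a b c a' b' c' : R) :
  pcmat a b c = pcmat a' b' c' -> [/\ a = a', b = b' & c = c'].
Proof.
move=> /matrixP E.
have := E (Ordinal (isT : (0 < 3)%N)) (Ordinal (isT : (1 < 3)%N)).
have := E (Ordinal (isT : (0 < 3)%N)) (Ordinal (isT : (2 < 3)%N)).
have := E (Ordinal (isT : (1 < 3)%N)) (Ordinal (isT : (2 < 3)%N)).
by rewrite !mxE /= => -> -> ->.
Qed.

Lemma had_pc (a b c a' b' c' : R) :
  hadamard (pcmat a b c) (pcmat a' b' c') = pcmat (a * a') (b * b') (c * c').
Proof.
apply/matrixP => i j; rewrite !mxE.
by case: i => [[|[|[|i]]] Hi]; case: j => [[|[|[|j]]] Hj] //=; rewrite ?mulr1 ?invfM.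
Qed.

Lemma hinv_pc (a b c : R) : hinv (pcmat a b c) = pcmat a^-1 b^-1 c^-1.
Proof.
apply/matrixP => i j; rewrite !mxE.
by case: i => [[|[|[|i]]] Hi]; case: j => [[|[|[|j]]] Hj] //=; rewrite ?invr1.
Qed.

Lemma hone_pc : hone R = pcmat 1 1 1.
Proof.
apply/matrixP => i j; rewrite !mxE.
by case: i => [[|[|[|i]]] Hi]; case: j => [[|[|[|j]]] Hj] //=; rewrite ?invr1.
Qed.

Lemma cube1 (k : R) : 0 < k -> k ^+ 3 = 1 -> k = 1.
Proof.
move=> k0 e. case: (ltrgtP k 1) => // h.
- have : k ^+ 3 < 1 by rewrite expr_lt1 // ltW.
  by rewrite e ltxx.
- have : 1 < k ^+ 3 by rewrite expr_gt1 // ?ltW.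
  by rewrite e ltxx.
Qed.

Lemma cuberoot (t : R) : 0 < t -> exists2 k, 0 < k & k ^+ 3 = t.
Proof.
move=> t0.
have h1 : (0:R) <= 1 + t by rewrite addr_ge0 ?ltW.
have h2 : ('X^3 - t%:P).[0] <= 0 <= ('X^3 - t%:P).[1 + t].
  rewrite !hornerE expr0n /= sub0r oppr_le0 ltW //=.
  rewrite subr_ge0. apply: le_trans (_ : 1 + t <= _).
    by rewrite lerDr.
  by rewrite -[X in X <= _]expr1 ler_eXn2l // ltrDl.
have [x /andP[x0 _] rx] := poly_ivt h1 h2.
move: rx; rewrite /root !hornerE subr_eq0 => /eqP xt.
exists x => //; rewrite lt_neqAle x0 andbT; apply/eqP => x00.
by move: xt; rewrite -x00 expr0n /= => t00; rewrite -t00 ltxx in t0.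
Qed.


Lemma conj_G (g n : 'M[R]_3) : inG g -> inG n -> hadamard (hadamard g n) (hinv g) = n.
Proof.
move=> [a [b [c [a0 b0 c0 ->]]]] [a' [b' [c' [_ _ _ ->]]]].
rewrite hinv_pc !had_pc; congr pcmat; rewrite mulrAC mulfV ?mul1r //; exact: lt0r_neq0.
Qed.

Lemma normal_of (S : 'M[R]_3 -> Prop) : is_subgroup S -> is_normal S.
Proof.
move=> sg; split => // g n gG Sn; case: (sg) => sG _ _ _.
by rewrite conj_G //; apply: sG.
Qed.

Lemma H_sub : is_subgroup (@inH R).
Proof.
split.
- move=> M [k [k0 ->]]; exists k, k^-1, k; split => //; by rewrite invr_gt0.
- exists 1; split => //; by rewrite hone_pc /Hmat invr1.
- move=> M N [k [k0 ->]] [k' [k0' ->]]; exists (k * k'); split; first exact: mulr_gt0.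
  by rewrite /Hmat had_pc invfM.
- move=> M [k [k0 ->]]; exists k^-1; split; first by rewrite invr_gt0.
  by rewrite /Hmat hinv_pc.
Qed.

Lemma L_sub : is_subgroup (@inL R).
Proof.
split.
- move=> M [y [z [y0 z0 ->]]]; exists y, (y * z), z; split => //; exact: mulr_gt0.
- exists 1, 1; split => //; by rewrite hone_pc /Lmat mulr1.
- move=> M N [y [z [y0 z0 ->]]] [y' [z' [y0' z0' ->]]]; exists (y * y'), (z * z').
  split; try exact: mulr_gt0.
  rewrite /Lmat had_pc; congr pcmat; ring.
- move=> M [y [z [y0 z0 ->]]]; exists y^-1, z^-1; split; try by rewrite invr_gt0.
  by rewrite /Lmat hinv_pc invfM.
Qed.

Lemma HL_cap (M : 'M[R]_3) : inH M /\ inL M <-> M = hone R.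
Proof.
split.
- move=> [[k [k0 ->]] [y [z [y0 z0]]]] /pcmat_inj [e1 e2 e3].
  have k1 : k = 1.
    apply: cube1 => //.
    rewrite exprS expr2 {2}e1 {2}e3 -e2 mulfV //; exact: lt0r_neq0.
  by rewrite k1 /Hmat invr1 hone_pc.
- move=> ->; split; first by exists 1; rewrite /Hmat invr1 hone_pc.
  by exists 1, 1; rewrite /Lmat mulr1 hone_pc.
Qed.

Lemma decomp (g : 'M[R]_3) : inG g -> exists h l, [/\ inH h, inL l & g = hadamard h l].
Proof.
move=> [a [b [c [a0 b0 c0 ->]]]].
have [k k0 e] : exists2 k, 0 < k & k ^+ 3 = a * c / b by apply: cuberoot; rewrite divr_gt0 ?mulr_gt0.
have kn : k != 0 by exact: lt0r_neq0.
have bn : b != 0 by exact: lt0r_neq0.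
exists (Hmat k), (Lmat (a / k) (c / k)); split.
- by exists k.
- by exists (a / k), (c / k); split => //; rewrite divr_gt0.
rewrite /Hmat /Lmat had_pc; congr pcmat; first by field.
  have an : a != 0 by exact: lt0r_neq0.
  have cn : c != 0 by exact: lt0r_neq0.
  have -> : b = a * c / k ^+ 3 by rewrite e; field; rewrite ?an ?cn ?bn.
  by field.
by field.
Qed.

Lemma inj_HL (h1 l1 h2 l2 : 'M[R]_3) : inH h1 -> inL l1 -> inH h2 -> inL l2 ->
   hadamard h1 l1 = hadamard h2 l2 -> h1 = h2 /\ l1 = l2.
Proof.
move=> [k1 [k10 ->]] [y1 [z1 [y10 z10 ->]]] [k2 [k20 ->]] [y2 [z2 [y20 z20 ->]]].
rewrite /Hmat /Lmat !had_pc => /pcmat_inj [eq1 eq2 eq3].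
have k1n : k1 != 0 by exact: lt0r_neq0.
have k2n : k2 != 0 by exact: lt0r_neq0.
have yzn : y1 * z1 != 0 by rewrite mulf_neq0 // lt0r_neq0.
have E : k2 ^+ 3 * (y1 * z1) = k1 ^+ 3 * (y1 * z1).
  transitivity (k1 * k2 ^+ 3 * (k1^-1 * (y1 * z1))); first by field.
  rewrite eq2; transitivity (k1 * (k2 * y2) * (k2 * z2)); first by field.
  by rewrite -eq1 -eq3; ring.
have kk : k1 = k2.
  apply/eqP; rewrite -(@eqrXn2 _ 3) ?ltW //; apply/eqP; exact: (mulIf yzn (esym E)).
subst k2.
have ey : y1 = y2 by exact: (mulfI k1n eq1).
have ez : z1 = z2 by exact: (mulfI k1n eq3).
by subst.
Qed.

End S.

Theorem mainTheorem6 (R : realType) :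
  (is_normal (@inH R) /\ is_normal (@inL R)) /\
  (internal_direct_product2 (@inH R) (@inL R) /\
   (forall h1 l1 h2 l2 : 'M[R]_3, inH h1 -> inL l1 -> inH h2 -> inL l2 ->
       hadamard (hadamard h1 l1) (hadamard h2 l2)
       = hadamard (hadamard h1 h2) (hadamard l1 l2)) /\
   (forall h1 l1 h2 l2 : 'M[R]_3, inH h1 -> inL l1 -> inH h2 -> inL l2 ->
       hadamard h1 l1 = hadamard h2 l2 -> h1 = h2 /\ l1 = l2) /\
   (forall g : 'M[R]_3, inG g -> exists h l, [/\ inH h, inL l & g = hadamard h l])).
Proof.
split; first by split; apply: normal_of; [exact: H_sub | exact: L_sub].
split; last split; last split.
- split.
  + move=> g; split; first exact: decomp.
    move=> [n1 [n2 [[k [k0 ->]] [y [z [y0 z0 ->]]] ->]]].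
    rewrite /Hmat /Lmat had_pc.
    exists (k * y), (k^-1 * (y * z)), (k * z); split => //;
      by rewrite ?mulr_gt0 ?invr_gt0.
  + exact: HL_cap.
  + by move=> M; rewrite -HL_cap; split => -[].
- by move=> *; apply/matrixP => i j; rewrite !mxE; ring.
- exact: inj_HL.
- exact: decomp.
Qed.
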